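(* Let $T>0$ and let $\pi=(\pi^n)_{n\geq 1}$ be a sequence of partitions $\pi^n=(0=t^n_0<t^n_1<\cdots<t^n_{N(\pi^n)}=T)$ of $[0,T]$ with vanishing mesh, i.e. $|\pi^n|\to 0$. Then: (i) $\pi$ is balanced if and only if $\liminf_{n\to\infty} N(\pi^n)\,\underline{\pi^n}>0$ and $\limsup_{n\to\infty} N(\pi^n)\,|\pi^n|<\infty$. (ii) For $0\le t_1\le t_2\le T$ let $N(\pi^n,t_1,t_2)$ denote the number of partition points of $\pi^n$ in $[t_1,t_2]$. If $\pi$ is balanced, then for any $h\in(0,T]$, $$\limsup_{n\to\infty}\frac{\sup_{t\in[0,T-h]}N(\pi^n,t,t+h)}{\inf_{t\in[0,T-h]}N(\pi^n,t,t+h)}<\infty.$$ (iii) If $\pi$ is balanced, then $$\limsup_n\frac{N(\pi^{n+1})}{N(\pi^n)}<\infty\iff\limsup_n\frac{|\pi^n|}{|\pi^{n+1}|}<\infty\iff\limsup_n\frac{\underline{\pi^n}}{\underline{\pi^{n+1}}}<\infty.$$ (iv) If $g\in C^1([0,T],\mathbb{R})$ is strictly increasing with $\inf_{[0,T]} g'>0$, then for any balanced partition sequence $(\pi^n)_{n\ge1}$ of $[0,T]$, the sequence $(g(\pi^n))_{n\geq1}$, where $g(\pi^n)=(g(t^n_0)<g(t^n_1)<\cdots<g(t^n_{N(\pi^n)}))$, is a balanced partition sequence of $g([0,T])=[g(0),g(T)]$.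
   Context: For a finite partition $\pi^n=(0=t^n_0<t^n_1<\cdots<t^n_{N(\pi^n)}=T)$ of $[0,T]$, $N(\pi^n)$ is the number of intervals, $|\pi^n|=\sup_{i}|t^n_{i}-t^n_{i-1}|$ is the largest interval length (mesh) and $\underline{\pi^n}=\inf_i|t^n_i-t^n_{i-1}|$ the smallest interval length. A sequence of partitions $(\pi^n)_{n\geq1}$ of an interval is called balanced if there exists $c>0$ such that $|\pi^n|/\underline{\pi^n}\le c$ for all $n\ge1$. *)

(* Defs.v *)
From Stdlib Require Import Reals List.
From Coquelicot Require Import Coquelicot.
Import ListNotations.
Open Scope R_scope.

(* A finite partition of [a,b]: N intervals, points t 0 < t 1 < ... < t N,
   t 0 = a, t N = b (only the values t 0 .. t N are relevant). *)
Definition is_partition (a b : R) (N : nat) (t : nat -> R) : Prop :=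
  (0 < N)%nat /\ t 0%nat = a /\ t N = b /\
  (forall i : nat, (i < N)%nat -> t i < t (S i)).

Definition mesh (N : nat) (t : nat -> R) : R :=
  fold_right Rmax 0 (map (fun i => t (S i) - t i) (seq 0 N)).

Definition minstep (N : nat) (t : nat -> R) : R :=
  fold_right Rmin (t 1%nat - t 0%nat) (map (fun i => t (S i) - t i) (seq 0 N)).

Definition balanced (N : nat -> nat) (t : nat -> nat -> R) : Prop :=
  exists c : R, c > 0 /\ forall n : nat, mesh (N n) (t n) / minstep (N n) (t n) <= c.

Definition npoints (N : nat) (t : nat -> R) (t1 t2 : R) : nat :=
  length (filter (fun i => if Rle_dec t1 (t i) then
                             if Rle_dec (t i) t2 then true else false
                           else false) (seq 0 (S N))).

(* sup / inf over s in [0, T-h] of N(pi, s, s+h) (finite: bounded by N+1) *)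
Definition sup_window (T h : R) (N : nat) (t : nat -> R) : R :=
  real (Lub_Rbar (fun x => exists s, 0 <= s <= T - h /\ x = INR (npoints N t s (s + h)))).
Definition inf_window (T h : R) (N : nat) (t : nat -> R) : R :=
  real (Glb_Rbar (fun x => exists s, 0 <= s <= T - h /\ x = INR (npoints N t s (s + h)))).

Definition C1_on_with (a b : R) (g g' : R -> R) : Prop :=
  (forall x, a <= x <= b ->
     filterlim (fun y => (g y - g x) / (y - x))
       (within (fun y => a <= y <= b /\ y <> x) (locally x)) (locally (g' x))) /\
  (forall x, a <= x <= b ->
     filterlim g' (within (fun y => a <= y <= b) (locally x)) (locally (g' x))).

(* Main.v *)
Require Import Defs.
From Stdlib Require Import Reals List Lra Lia.
From Coquelicot Require Import Coquelicot.
Open Scope R_scope.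


Lemma fold_max_ge : forall l x d, In x l -> x <= fold_right Rmax d l.
Proof.
  induction l as [|y l IH]; simpl; intros x d H; [contradiction|].
  destruct H as [<-|H]; [apply Rmax_l|]. eapply Rle_trans; [apply (IH x d H)|apply Rmax_r].
Qed.

Lemma fold_min_le : forall l x d, In x l -> fold_right Rmin d l <= x.
Proof.
  induction l as [|y l IH]; simpl; intros x d H; [contradiction|].
  destruct H as [<-|H]; [apply Rmin_l|]. eapply Rle_trans; [apply Rmin_r|apply (IH x d H)].
Qed.

Lemma fold_min_pos : forall l d, d > 0 -> (forall x, In x l -> x > 0) -> fold_right Rmin d l > 0.
Proof.
  induction l as [|y l IH]; simpl; intros d Hd H; [auto|].
  apply Rmin_glb_lt; [apply H; auto| apply IH; auto].
Qed.

Lemma gap_le_mesh N t i : (i < N)%nat -> t (S i) - t i <= mesh N t.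
Proof.
  intros Hi. unfold mesh. apply fold_max_ge. apply in_map_iff. exists i.
  split; auto. apply in_seq. lia.
Qed.

Lemma minstep_le_gap N t i : (i < N)%nat -> minstep N t <= t (S i) - t i.
Proof.
  intros Hi. unfold minstep. apply fold_min_le. apply in_map_iff. exists i.
  split; auto. apply in_seq. lia.
Qed.

Lemma minstep_pos a b N t : is_partition a b N t -> minstep N t > 0.
Proof.
  intros (HN & _ & _ & Hinc). unfold minstep. apply fold_min_pos.
  - specialize (Hinc 0%nat HN). lra.
  - intros x Hx. apply in_map_iff in Hx. destruct Hx as [i [<- Hi]].
    apply in_seq in Hi. specialize (Hinc i ltac:(lia)). lra.
Qed.

Lemma mesh_ge_min a b N t : is_partition a b N t -> minstep N t <= mesh N t.
Proof.
  intros Hp. destruct Hp as (HN & _). eapply Rle_trans; [apply (minstep_le_gap N t 0 HN)|].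
  apply gap_le_mesh; auto.
Qed.

Lemma mesh_pos a b N t : is_partition a b N t -> mesh N t > 0.
Proof. intros Hp. pose proof (minstep_pos _ _ _ _ Hp). pose proof (mesh_ge_min _ _ _ _ Hp). lra. Qed.

Lemma telesc a b N t : is_partition a b N t -> forall k, (k <= N)%nat ->
  INR k * minstep N t <= t k - t 0%nat <= INR k * mesh N t.
Proof.
  intros Hp. induction k as [|k IH]; intros Hk.
  - simpl. lra.
  - rewrite S_INR. specialize (IH ltac:(lia)).
    pose proof (minstep_le_gap N t k ltac:(lia)). pose proof (gap_le_mesh N t k ltac:(lia)).
    lra.
Qed.

Lemma total_bounds a b N t : is_partition a b N t ->
  INR N * minstep N t <= b - a <= INR N * mesh N t.
Proof.
  intros Hp. pose proof (telesc _ _ _ _ Hp N (le_n _)) as H.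
  destruct Hp as (_ & H0 & HN & _). rewrite H0, HN in H. exact H.
Qed.

Lemma mono a b N t : is_partition a b N t -> forall i j, (i <= j <= N)%nat -> t i <= t j.
Proof.
  intros Hp i j. induction j as [|j IH]; intros Hij.
  - replace i with 0%nat by lia. lra.
  - destruct (Nat.eq_dec i (S j)) as [->|Hne]; [lra|].
    specialize (IH ltac:(lia)). destruct Hp as (_ & _ & _ & Hinc).
    specialize (Hinc j ltac:(lia)). lra.
Qed.

Definition inwin (t : nat -> R) (a b : R) (i : nat) : bool :=
  if Rle_dec a (t i) then if Rle_dec (t i) b then true else false else false.

Definition cnt t a b k n := length (filter (inwin t a b) (seq k n)).

Lemma inwin_true t a b i : a <= t i <= b -> inwin t a b i = true.
Proof. intros H. unfold inwin. destruct (Rle_dec a (t i)); [|lra]. destruct (Rle_dec (t i) b); [auto|lra]. Qed.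

Lemma inwin_true' t a b i : inwin t a b i = true -> a <= t i <= b.
Proof. unfold inwin. destruct (Rle_dec a (t i)); [|discriminate]. destruct (Rle_dec (t i) b); [auto|discriminate]. Qed.

Lemma inwin_shift t a a' b i : a <= t i -> a' <= t i -> inwin t a b i = inwin t a' b i.
Proof. intros. unfold inwin. destruct (Rle_dec a (t i)); [|lra]. destruct (Rle_dec a' (t i)); [|lra]. auto. Qed.

Lemma cnt_S t a b k n : cnt t a b k (S n) =
  ((if inwin t a b k then 1 else 0) + cnt t a b (S k) n)%nat.
Proof. unfold cnt. simpl. destruct (inwin t a b k); reflexivity. Qed.

Section Cnt.
Variables (a0 b0 : R) (N : nat) (t : nat -> R).
Hypothesis Hp : is_partition a0 b0 N t.

Lemma cnt_upper : forall n k a b, (k + n <= S N)%nat -> (cnt t a b k n >= 1)%nat ->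
  (INR (cnt t a b k n) - 1) * minstep N t <= b - a.
Proof.
  pose proof (minstep_pos _ _ _ _ Hp) as Hm.
  induction n as [|n IH]; intros k a b Hk Hc.
  - unfold cnt in Hc. simpl in Hc. lia.
  - rewrite cnt_S in *. destruct (inwin t a b k) eqn:E.
    + apply inwin_true' in E.
      assert (Heq : cnt t a b (S k) n = cnt t (a + minstep N t) b (S k) n).
      { unfold cnt. f_equal. apply filter_ext_in. intros i Hi. apply in_seq in Hi.
        apply inwin_shift; [|].
        - pose proof (mono _ _ _ _ Hp k i ltac:(lia)). lra.
        - pose proof (mono _ _ _ _ Hp (S k) i ltac:(lia)).
          pose proof (minstep_le_gap N t k ltac:(lia)). lra. }
      destruct (cnt t a b (S k) n) as [|c] eqn:Ec.
      * simpl. lra.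
      * specialize (IH (S k) (a + minstep N t) b ltac:(lia) ltac:(lia)).
        rewrite <- Heq in IH. replace (1 + S c)%nat with (S (S c)) by lia.
        rewrite (S_INR (S c)). lra.
    + simpl in *. apply IH; lia.
Qed.

Lemma cnt_exact : forall n k b, (k + n <= N)%nat -> t k <= b <= t (k + n)%nat ->
  b - t k <= INR (cnt t (t k) b k (S n)) * mesh N t.
Proof.
  pose proof (mesh_pos _ _ _ _ Hp) as HM.
  induction n as [|n IH]; intros k b Hk Hb.
  - rewrite Nat.add_0_r in Hb. pose proof (pos_INR (cnt t (t k) b k 1)). nra.
  - rewrite cnt_S. rewrite (inwin_true t (t k) b k) by lra.
    pose proof (gap_le_mesh N t k ltac:(lia)) as Hg.
    destruct (Rlt_dec b (t (S k))) as [Hlt|Hge].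
    + pose proof (pos_INR (cnt t (t k) b (S k) (S n))).
      rewrite plus_INR. simpl (INR 1). nra.
    + replace (k + S n)%nat with (S k + n)%nat in Hb by lia.
      specialize (IH (S k) b ltac:(lia) ltac:(lra)).
      assert (Heq : cnt t (t k) b (S k) (S n) = cnt t (t (S k)) b (S k) (S n)).
      { unfold cnt. f_equal. apply filter_ext_in. intros i Hi. apply in_seq in Hi.
        pose proof (mono _ _ _ _ Hp (S k) i ltac:(lia)).
        destruct Hp as (_ & _ & _ & Hinc). specialize (Hinc k ltac:(lia)).
        apply inwin_shift; lra. }
      rewrite Heq, plus_INR. simpl (INR 1). lra.
Qed.

Lemma cnt_gen : forall n k a b, (k + n <= N)%nat -> t k <= a <= b -> b <= t (k + n)%nat ->
  b - a <= (INR (cnt t a b k (S n)) + 1) * mesh N t.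
Proof.
  pose proof (mesh_pos _ _ _ _ Hp) as HM.
  induction n as [|n IH]; intros k a b Hk Hab Hb.
  - rewrite Nat.add_0_r in Hb. pose proof (pos_INR (cnt t a b k 1)). nra.
  - rewrite cnt_S. rewrite plus_INR.
    assert (H1 : 0 <= INR (if inwin t a b k then 1 else 0)) by apply pos_INR.
    pose proof (gap_le_mesh N t k ltac:(lia)) as Hg.
    pose proof (pos_INR (cnt t a b (S k) (S n))) as Hc.
    replace (k + S n)%nat with (S k + n)%nat in Hb by lia.
    destruct (Rle_dec (t (S k)) a) as [Hle|Hlt].
    + specialize (IH (S k) a b ltac:(lia) ltac:(lra) Hb). nra.
    + destruct (Rlt_dec b (t (S k))) as [Hb2|Hb2].
      * nra.
      * pose proof (cnt_exact n (S k) b ltac:(lia) ltac:(lra)) as HE.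
        assert (Heq : cnt t a b (S k) (S n) = cnt t (t (S k)) b (S k) (S n)).
        { unfold cnt. f_equal. apply filter_ext_in. intros i Hi. apply in_seq in Hi.
          pose proof (mono _ _ _ _ Hp (S k) i ltac:(lia)).
          apply inwin_shift; lra. }
        rewrite <- Heq in HE. nra.
Qed.

End Cnt.

Lemma limsup_fin_of_bound (u : nat -> R) M : eventually (fun n => u n <= M) ->
  Rbar_lt (LimSup_seq u) p_infty.
Proof.
  intros H. pose proof (LimSup_le u (fun _ => M) H) as H1. rewrite LimSup_seq_const in H1.
  destruct (LimSup_seq u); simpl in *; auto.
Qed.

Lemma limsup_bound_of_fin (u : nat -> R) : Rbar_lt (LimSup_seq u) p_infty ->
  exists M, eventually (fun n => u n <= M).
Proof.
  destruct (ex_LimSup_seq u) as [l Hl]. rewrite (is_LimSup_seq_unique _ _ Hl).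
  destruct l as [l| |]; simpl; intros H; try contradiction.
  - destruct (Hl (mkposreal 1 Rlt_0_1)) as [_ [N0 HN]]. exists (l + 1). exists N0.
    intros n Hn. specialize (HN n Hn). simpl in HN. lra.
  - destruct (Hl 0) as [N0 HN]. exists 0. exists N0. intros n Hn. specialize (HN n Hn). lra.
Qed.

Lemma liminf_pos_of_bound (u : nat -> R) m : m > 0 -> eventually (fun n => m <= u n) ->
  Rbar_lt 0 (LimInf_seq u).
Proof.
  intros Hm H. pose proof (LimInf_le (fun _ => m) u H) as H1. rewrite LimInf_seq_const in H1.
  destruct (LimInf_seq u); simpl in *; auto. lra.
Qed.

Lemma liminf_bound_of_pos (u : nat -> R) : Rbar_lt 0 (LimInf_seq u) ->
  exists m, m > 0 /\ eventually (fun n => m <= u n).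
Proof.
  destruct (ex_LimInf_seq u) as [l Hl]. rewrite (is_LimInf_seq_unique _ _ Hl).
  destruct l as [l| |]; simpl; intros H; try contradiction.
  - assert (Hp : 0 < l / 2) by lra.
    destruct (Hl (mkposreal _ Hp)) as [_ [N0 HN]]. exists (l / 2). split; [lra|]. exists N0.
    intros n Hn. specialize (HN n Hn). simpl in HN. lra.
  - destruct (Hl 1) as [N0 HN]. exists 1. split; [lra|]. exists N0. intros n Hn. specialize (HN n Hn). lra.
Qed.

Lemma finite_max (f : nat -> R) n0 : exists C, forall n, (n < n0)%nat -> f n <= C.
Proof.
  induction n0 as [|n0 [C HC]].
  - exists 0. intros; lia.
  - exists (Rmax C (f n0)). intros n Hn. destruct (Nat.eq_dec n n0) as [->|Hne].
    + apply Rmax_r.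
    + eapply Rle_trans; [apply HC; lia|apply Rmax_l].
Qed.

Lemma limsup_compare (u v : nat -> R) K : (forall n, u n <= K * v n) -> K > 0 ->
  Rbar_lt (LimSup_seq v) p_infty -> Rbar_lt (LimSup_seq u) p_infty.
Proof.
  intros H HK Hv. destruct (limsup_bound_of_fin v Hv) as [M [N0 HN]].
  apply limsup_fin_of_bound with (K * M). exists N0. intros n Hn.
  specialize (HN n Hn). specialize (H n). nra.
Qed.

Section Win.
Variables (T : R) (N : nat) (t : nat -> R).
Hypothesis Hp : is_partition 0 T N t.

Lemma win_upper h s : 0 <= s -> 0 <= h ->
  INR (npoints N t s (s + h)) <= h / minstep N t + 1.
Proof.
  pose proof (minstep_pos _ _ _ _ Hp) as Hm.
  intros Hs Hh. change (npoints N t s (s + h)) with (cnt t s (s + h) 0 (S N)).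
  destruct (cnt t s (s + h) 0 (S N)) as [|c] eqn:E.
  - simpl. assert (0 <= h / minstep N t) by (apply Rdiv_le_0_compat; lra). lra.
  - pose proof (cnt_upper _ _ _ _ Hp (S N) 0 s (s + h) ltac:(lia)) as H.
    rewrite E in H. specialize (H ltac:(lia)).
    assert (INR (S c) - 1 <= h / minstep N t); [|lra].
    apply Rmult_le_reg_r with (minstep N t); auto.
    unfold Rdiv. rewrite Rmult_assoc, Rinv_l by lra. lra.
Qed.

Lemma win_lower h s : 0 <= s -> s + h <= T -> 0 <= h ->
  h <= (INR (npoints N t s (s + h)) + 1) * mesh N t.
Proof.
  intros Hs Hs2 Hh. change (npoints N t s (s + h)) with (cnt t s (s + h) 0 (S N)).
  pose proof (cnt_gen _ _ _ _ Hp N 0 s (s + h) ltac:(lia)) as H.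
  destruct Hp as (_ & H0 & HN & _). rewrite H0 in H. rewrite Nat.add_0_l, HN in H.
  specialize (H ltac:(lra) ltac:(lra)). lra.
Qed.

Definition WS h := fun x => exists s, 0 <= s <= T - h /\ x = INR (npoints N t s (s + h)).

Lemma sup_window_bounds h : 0 < h <= T ->
  0 <= sup_window T h N t <= h / minstep N t + 1.
Proof.
  intros Hh. unfold sup_window. fold (WS h).
  destruct (Lub_Rbar_correct (WS h)) as [Hub Hlub].
  assert (H0 : WS h (INR (npoints N t 0 (0 + h)))) by (exists 0; split; [lra|auto]).
  assert (Hb : is_ub_Rbar (WS h) (h / minstep N t + 1)).
  { intros x [s [Hs ->]]. simpl. apply win_upper; lra. }
  specialize (Hlub _ Hb). specialize (Hub _ H0). pose proof (pos_INR (npoints N t 0 (0 + h))).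
  destruct (Lub_Rbar (WS h)); simpl in *; try contradiction; lra.
Qed.

Lemma inf_window_bounds h : 0 < h <= T ->
  h / mesh N t - 1 <= inf_window T h N t.
Proof.
  pose proof (mesh_pos _ _ _ _ Hp) as HM.
  intros Hh. unfold inf_window. fold (WS h).
  destruct (Glb_Rbar_correct (WS h)) as [Hlb Hglb].
  assert (H0 : WS h (INR (npoints N t 0 (0 + h)))) by (exists 0; split; [lra|auto]).
  assert (Hb : is_lb_Rbar (WS h) (h / mesh N t - 1)).
  { intros x [s [Hs ->]]. simpl. pose proof (win_lower h s ltac:(lra) ltac:(lra) ltac:(lra)).
    assert (h / mesh N t <= INR (npoints N t s (s + h)) + 1); [|lra].
    apply Rmult_le_reg_r with (mesh N t); auto.
    unfold Rdiv. rewrite Rmult_assoc, Rinv_l by lra. lra. }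
  specialize (Hglb _ Hb). specialize (Hlb _ H0).
  destruct (Glb_Rbar (WS h)); simpl in *; try contradiction; lra.
Qed.
End Win.

Lemma div_le2 p q r s K : q > 0 -> s > 0 -> p * s <= K * (r * q) -> p / q <= K * (r / s).
Proof.
  intros Hq Hs H. apply Rmult_le_reg_r with (q * s); [nra|].
  replace (p / q * (q * s)) with (p * s) by (field; lra).
  replace (K * (r / s) * (q * s)) with (K * (r * q)) by (field; lra). exact H.
Qed.

Lemma bal_le (N : nat -> nat) (t : nat -> nat -> R) T c n : is_partition 0 T (N n) (t n) ->
  mesh (N n) (t n) / minstep (N n) (t n) <= c -> mesh (N n) (t n) <= c * minstep (N n) (t n).
Proof.
  intros Hp H. pose proof (minstep_pos _ _ _ _ Hp) as Hm.
  apply Rmult_le_compat_r with (r := minstep (N n) (t n)) in H; [|lra].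
  unfold Rdiv in H. rewrite Rmult_assoc, Rinv_l in H by lra. lra.
Qed.

Section Main.
Variables (T : R) (N : nat -> nat) (t : nat -> nat -> R).
Hypothesis HT : T > 0.
Hypothesis Hp : forall n, is_partition 0 T (N n) (t n).

Lemma facts n : INR (N n) > 0 /\ mesh (N n) (t n) > 0 /\ minstep (N n) (t n) > 0 /\
  T <= INR (N n) * mesh (N n) (t n) /\ INR (N n) * minstep (N n) (t n) <= T.
Proof.
  pose proof (Hp n) as H. pose proof (total_bounds _ _ _ _ H).
  pose proof (mesh_pos _ _ _ _ H). pose proof (minstep_pos _ _ _ _ H).
  destruct H as (HN & _). apply lt_0_INR in HN. lra.
Qed.

Lemma part_i : balanced N t <->
     (Rbar_lt 0 (LimInf_seq (fun n => INR (N n) * minstep (N n) (t n))) /\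
      Rbar_lt (LimSup_seq (fun n => INR (N n) * mesh (N n) (t n))) p_infty).
Proof.
  split.
  - intros [c [Hc H]]. split.
    + apply liminf_pos_of_bound with (T / c). { apply Rdiv_lt_0_compat; lra. }
      exists 0%nat. intros n _. pose proof (bal_le _ _ _ _ _ (Hp n) (H n)).
      destruct (facts n) as (HA & Hx & Hy & H1 & H2).
      apply Rmult_le_reg_r with c; auto. unfold Rdiv. rewrite Rmult_assoc, Rinv_l by lra. nra.
    + apply limsup_fin_of_bound with (c * T). exists 0%nat. intros n _.
      pose proof (bal_le _ _ _ _ _ (Hp n) (H n)).
      destruct (facts n) as (HA & Hx & Hy & H1 & H2). nra.
  - intros [H1 H2]. destruct (liminf_bound_of_pos _ H1) as [m [Hm [N1 HN1]]].
    destruct (limsup_bound_of_fin _ H2) as [M [N2 HN2]].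
    destruct (finite_max (fun n => mesh (N n) (t n) / minstep (N n) (t n)) (N1 + N2)) as [C HC].
    exists (Rmax 1 (Rmax (M / m) C)). split.
    { eapply Rlt_le_trans; [|apply Rmax_l]. lra. }
    intros n. destruct (Compare_dec.lt_dec n (N1 + N2)) as [Hl|Hl].
    + eapply Rle_trans; [apply HC; auto|]. eapply Rle_trans; [|apply Rmax_r]. apply Rmax_r.
    + eapply Rle_trans; [|apply Rmax_r]. eapply Rle_trans; [|apply Rmax_l].
      specialize (HN1 n ltac:(lia)). specialize (HN2 n ltac:(lia)).
      destruct (facts n) as (HA & Hx & Hy & _ & _).
      rewrite <- (Rmult_1_l (M / m)). apply div_le2; auto. nra.
Qed.

Lemma part_ii : is_lim_seq (fun n => mesh (N n) (t n)) 0 -> balanced N t -> forall h, 0 < h <= T ->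
     Rbar_lt (LimSup_seq (fun n => sup_window T h (N n) (t n) / inf_window T h (N n) (t n)))
             p_infty.
Proof.
  intros Hlim [c [Hc Hb]] h Hh.
  apply is_lim_seq_spec in Hlim.
  assert (He : 0 < h / 2) by lra.
  destruct (Hlim (mkposreal _ He)) as [N0 HN0].
  apply limsup_fin_of_bound with (2 * c + 1). exists N0. intros n Hn.
  specialize (HN0 n Hn). simpl in HN0. rewrite Rminus_0_r in HN0.
  destruct (facts n) as (HA & Hx & Hy & _ & _).
  rewrite Rabs_pos_eq in HN0 by lra.
  pose proof (bal_le _ _ _ _ _ (Hp n) (Hb n)) as Hxy.
  pose proof (sup_window_bounds T (N n) (t n) (Hp n) h Hh) as HS.
  pose proof (inf_window_bounds T (N n) (t n) (Hp n) h Hh) as HI.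
  set (x := mesh (N n) (t n)) in *. set (y := minstep (N n) (t n)) in *.
  set (S := sup_window T h (N n) (t n)) in *. set (I := inf_window T h (N n) (t n)) in *.
  assert (Hu : 2 <= h / x).
  { apply Rmult_le_reg_r with x; auto. unfold Rdiv. rewrite Rmult_assoc, Rinv_l by lra. lra. }
  assert (Hv : h / y <= c * (h / x)).
  { apply div_le2; auto. nra. }
  assert (HIp : I > 0) by lra.
  assert (S <= (2 * c + 1) * I) by nra.
  apply Rmult_le_reg_r with I; auto. unfold Rdiv. rewrite Rmult_assoc, Rinv_l by lra. lra.
Qed.

Lemma part_iii : balanced N t ->
     (Rbar_lt (LimSup_seq (fun n => INR (N (S n)) / INR (N n))) p_infty <->
      Rbar_lt (LimSup_seq (fun n => mesh (N n) (t n) / mesh (N (S n)) (t (S n)))) p_infty)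
     /\
     (Rbar_lt (LimSup_seq (fun n => mesh (N n) (t n) / mesh (N (S n)) (t (S n)))) p_infty <->
      Rbar_lt (LimSup_seq (fun n => minstep (N n) (t n) / minstep (N (S n)) (t (S n)))) p_infty).
Proof.
  intros [c [Hc Hb]].
  assert (F : forall n,
    mesh (N n) (t n) / mesh (N (S n)) (t (S n)) <= c * (INR (N (S n)) / INR (N n)) /\
    INR (N (S n)) / INR (N n) <= c * (mesh (N n) (t n) / mesh (N (S n)) (t (S n))) /\
    minstep (N n) (t n) / minstep (N (S n)) (t (S n)) <= c * (INR (N (S n)) / INR (N n)) /\
    INR (N (S n)) / INR (N n) <= c * (minstep (N n) (t n) / minstep (N (S n)) (t (S n)))).
  { intros n. pose proof (bal_le _ _ _ _ _ (Hp n) (Hb n)) as B1.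
    pose proof (bal_le _ _ _ _ _ (Hp (S n)) (Hb (S n))) as B2.
    destruct (facts n) as (HA & Hx & Hy & H1 & H2).
    destruct (facts (S n)) as (HA' & Hx' & Hy' & H1' & H2').
    repeat split; apply div_le2; auto; nra. }
  set (X := fun n => INR (N (S n)) / INR (N n)).
  set (Y := fun n => mesh (N n) (t n) / mesh (N (S n)) (t (S n))).
  set (Z := fun n => minstep (N n) (t n) / minstep (N (S n)) (t (S n))).
  change (fun n => INR (N (S n)) / INR (N n)) with X.
  change (fun n => mesh (N n) (t n) / mesh (N (S n)) (t (S n))) with Y.
  change (fun n => minstep (N n) (t n) / minstep (N (S n)) (t (S n))) with Z.
  split; split; intros H.
  - apply (limsup_compare Y X c); auto. intros n; apply F.
  - apply (limsup_compare X Y c); auto. intros n; apply F.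
  - apply (limsup_compare Z X c); auto. intros n; apply F.
    apply (limsup_compare X Y c); auto. intros n; apply F.
  - apply (limsup_compare Y X c); auto. intros n; apply F.
    apply (limsup_compare X Z c); auto. intros n; apply F.
Qed.
End Main.

Lemma ball_R (x e y : R) : ball x e y <-> Rabs (y - x) < e.
Proof. reflexivity. Qed.

Definition clamp (T z : R) := Rmax 0 (Rmin T z).

Lemma clamp_id T z : 0 <= z <= T -> clamp T z = z.
Proof. intros H. unfold clamp. rewrite Rmin_right by lra. rewrite Rmax_right; lra. Qed.

Lemma clamp_in T z : 0 <= T -> 0 <= clamp T z <= T.
Proof. intros H. unfold clamp. unfold Rmax, Rmin.
  destruct (Rle_dec T z); destruct (Rle_dec 0 _); lra. Qed.

Lemma clamp_lip T z c : 0 <= c <= T -> Rabs (clamp T z - c) <= Rabs (z - c).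
Proof. intros H. unfold clamp, Rmax, Rmin.
  destruct (Rle_dec T z); destruct (Rle_dec 0 _);
  unfold Rabs; repeat destruct Rcase_abs; lra. Qed.

Section G.
Variables (T : R) (g g' : R -> R).
Hypothesis HT : T > 0.
Hypothesis HC : C1_on_with 0 T g g'.

Definition Gc := fun z => g (clamp T z).

Lemma dq_bound z : 0 <= z <= T -> exists d : posreal, forall w, 0 <= w <= T -> w <> z ->
  Rabs (w - z) < d -> Rabs ((g w - g z) / (w - z) - g' z) < 1.
Proof.
  intros Hz. destruct HC as [H1 _]. specialize (H1 z Hz).
  apply filterlim_locally with (eps := mkposreal 1 Rlt_0_1) in H1.
  destruct H1 as [d Hd]. exists d. intros w Hw Hne Hwd. apply (Hd w); auto.
Qed.

Lemma Gc_cont z : 0 <= z <= T -> continuity_pt Gc z.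
Proof.
  intros Hz. apply continuity_pt_filterlim. apply filterlim_locally. intros eps.
  destruct (dq_bound z Hz) as [d Hd].
  assert (Hk : 0 < eps / (Rabs (g' z) + 1)).
  { apply Rdiv_lt_0_compat; [apply cond_pos|]. pose proof (Rabs_pos (g' z)); lra. }
  assert (Hdel : 0 < Rmin d (eps / (Rabs (g' z) + 1))).
  { apply Rmin_glb_lt; [apply cond_pos|auto]. }
  exists (mkposreal _ Hdel). intros y Hy. apply ball_R in Hy. simpl in Hy. apply ball_R.
  unfold Gc. rewrite (clamp_id T z Hz).
  set (w := clamp T y). assert (Hw : 0 <= w <= T) by (apply clamp_in; lra).
  assert (Hwz : Rabs (w - z) < Rmin d (eps / (Rabs (g' z) + 1))).
  { eapply Rle_lt_trans; [apply clamp_lip; auto|auto]. }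
  destruct (Req_dec w z) as [->|Hne].
  { rewrite Rminus_eq_0, Rabs_R0. apply cond_pos. }
  assert (Hwd : Rabs (w - z) < d) by (eapply Rlt_le_trans; [apply Hwz|apply Rmin_l]).
  assert (Hwe : Rabs (w - z) < eps / (Rabs (g' z) + 1)) by (eapply Rlt_le_trans; [apply Hwz|apply Rmin_r]).
  specialize (Hd w Hw Hne Hwd).
  set (q := (g w - g z) / (w - z)) in *.
  assert (Heq : g w - g z = q * (w - z)) by (unfold q; field; lra).
  rewrite Heq, Rabs_mult.
  assert (Hq : Rabs q <= Rabs (g' z) + 1).
  { pose proof (Rabs_triang_inv q (g' z)). lra. }
  assert (Hpos : 0 < Rabs (g' z) + 1) by (pose proof (Rabs_pos (g' z)); lra).
  apply Rmult_lt_compat_r with (r := Rabs (g' z) + 1) in Hwe; auto.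
  unfold Rdiv in Hwe. rewrite Rmult_assoc, Rinv_l in Hwe by lra.
  pose proof (Rabs_pos q). pose proof (Rabs_pos (w - z)). nra.
Qed.

Lemma Gc_deriv z : 0 < z < T -> is_derive Gc z (g' z).
Proof.
  intros Hz. apply is_derive_Reals. intros eps Heps.
  destruct HC as [H1 _]. specialize (H1 z ltac:(lra)).
  apply filterlim_locally with (eps := mkposreal eps Heps) in H1.
  destruct H1 as [d Hd].
  assert (Hdel : 0 < Rmin d (Rmin z (T - z))).
  { apply Rmin_glb_lt; [apply cond_pos|]. apply Rmin_glb_lt; lra. }
  exists (mkposreal _ Hdel). intros h Hh0 Hh. simpl in Hh.
  pose proof (Rmin_l d (Rmin z (T - z))). pose proof (Rmin_r d (Rmin z (T - z))).
  pose proof (Rmin_l z (T - z)). pose proof (Rmin_r z (T - z)).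
  assert (Hzh : 0 <= z + h <= T).
  { unfold Rabs in Hh; destruct Rcase_abs in Hh; lra. }
  unfold Gc. rewrite (clamp_id T (z + h) Hzh), (clamp_id T z ltac:(lra)).
  specialize (Hd (z + h)). apply ball_R in Hd; simpl in Hd.
  - replace (z + h - z) with h in Hd by ring. exact Hd.
  - apply ball_R. replace (z + h - z) with h by ring. lra.
  - split; auto. lra.
Qed.

Lemma gp_cont_ext c : 0 <= c <= T -> continuity_pt (fun z => g' (clamp T z)) c.
Proof.
  intros Hc. apply continuity_pt_filterlim. rewrite (clamp_id T c Hc).
  destruct HC as [_ H2]. specialize (H2 c Hc).
  intros P HP. specialize (H2 P HP). destruct H2 as [d Hd].
  exists d. intros y Hy. apply ball_R in Hy. apply Hd.
  - apply ball_R. eapply Rle_lt_trans; [apply clamp_lip; auto|exact Hy].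
  - apply clamp_in; lra.
Qed.

Lemma gp_upper : exists M, forall c, 0 <= c <= T -> g' c <= M.
Proof.
  destruct (continuity_ab_maj (fun z => g' (clamp T z)) 0 T ltac:(lra) gp_cont_ext) as [Mx [HM _]].
  exists (g' (clamp T Mx)). intros c Hc. specialize (HM c Hc). simpl in HM.
  rewrite (clamp_id T c Hc) in HM. exact HM.
Qed.

Lemma g_mvt x y : 0 <= x -> x < y -> y <= T -> exists c, 0 <= c <= T /\ g y - g x = g' c * (y - x).
Proof.
  intros Hx Hxy Hy.
  destruct (MVT_gen Gc x y g') as [c [Hc Heq]].
  - intros z Hz. rewrite Rmin_left, Rmax_right in Hz by lra. apply Gc_deriv. lra.
  - intros z Hz. rewrite Rmin_left, Rmax_right in Hz by lra. apply Gc_cont. lra.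
  - rewrite Rmin_left, Rmax_right in Hc by lra. exists c. split; [lra|].
    unfold Gc in Heq. rewrite (clamp_id T x), (clamp_id T y) in Heq by lra. exact Heq.
Qed.
End G.

Lemma fold_max_le : forall l d B, d <= B -> (forall x, In x l -> x <= B) -> fold_right Rmax d l <= B.
Proof.
  induction l as [|y l IH]; simpl; intros d B Hd H; auto.
  apply Rmax_lub; [apply H; auto|apply IH; auto].
Qed.

Lemma fold_min_ge : forall l d B, B <= d -> (forall x, In x l -> B <= x) -> B <= fold_right Rmin d l.
Proof.
  induction l as [|y l IH]; simpl; intros d B Hd H; auto.
  apply Rmin_glb; [apply H; auto|apply IH; auto].
Qed.

Lemma pt_in T N t i : is_partition 0 T N t -> (i <= N)%nat -> 0 <= t i <= T.
Proof.
  intros Hp Hi. pose proof (mono _ _ _ _ Hp 0 i ltac:(lia)). pose proof (mono _ _ _ _ Hp i N ltac:(lia)).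
  destruct Hp as (_ & E0 & EN & _). lra.
Qed.

Lemma part_iv (T : R) (N : nat -> nat) (t : nat -> nat -> R) :
  T > 0 -> (forall n, is_partition 0 T (N n) (t n)) ->
  forall g : R -> R,
     (exists g' : R -> R, C1_on_with 0 T g g' /\
        Rbar_lt 0 (Glb_Rbar (fun y => exists x, 0 <= x <= T /\ y = g' x))) ->
     (forall x y, 0 <= x <= T -> 0 <= y <= T -> x < y -> g x < g y) ->
     balanced N t ->
     (forall n, is_partition (g 0) (g T) (N n) (fun i => g (t n i))) /\
     balanced N (fun n i => g (t n i)).
Proof.
  intros HT Hp g [g' [HC Hglb]] Hinc [c [Hc Hb]].
  split.
  { intros n. pose proof (Hp n) as Hpn. destruct (Hp n) as (HN & H0 & HNT & Hi).
    split; [auto|]. split; [rewrite H0; auto|]. split; [rewrite HNT; auto|].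
    intros i Hi'. apply Hinc; [apply (pt_in T (N n)); auto; lia|apply (pt_in T (N n)); auto; lia|].
    apply Hi; auto. }
  set (E := fun y => exists x, 0 <= x <= T /\ y = g' x) in *.
  destruct (Glb_Rbar_correct E) as [Hlb _].
  assert (HE0 : E (g' 0)) by (exists 0; split; [lra|auto]).
  pose proof (Hlb _ HE0) as Hle.
  destruct (Glb_Rbar E) as [m0| |] eqn:Em; simpl in Hglb, Hle; try contradiction.
  assert (Hm : forall x, 0 <= x <= T -> m0 <= g' x).
  { intros x Hx. assert (E (g' x)) by (exists x; split; auto). specialize (Hlb _ H). exact Hlb. }
  destruct (gp_upper T g g' HT HC) as [M HM].
  assert (HMp : M > 0) by (pose proof (Hm 0 ltac:(lra)); pose proof (HM 0 ltac:(lra)); lra).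
  assert (Hgap : forall n i, (i < N n)%nat ->
     m0 * (t n (S i) - t n i) <= g (t n (S i)) - g (t n i) <= M * (t n (S i) - t n i)).
  { intros n i Hi. pose proof (pt_in T (N n) (t n) i (Hp n) ltac:(lia)).
    pose proof (pt_in T (N n) (t n) (S i) (Hp n) ltac:(lia)).
    destruct (Hp n) as (_ & _ & _ & Hinc').
    specialize (Hinc' i Hi).
    destruct (g_mvt T g g' HT HC (t n i) (t n (S i)) ltac:(lra) ltac:(lra) ltac:(lra)) as [c0 [Hc0 Heq]].
    rewrite Heq. specialize (Hm c0 Hc0). specialize (HM c0 Hc0). split; nra. }
  exists (M * c / m0). split.
  { apply Rdiv_lt_0_compat; nra. }
  intros n.
  pose proof (bal_le _ _ _ _ _ (Hp n) (Hb n)) as Hxy.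
  pose proof (minstep_pos _ _ _ _ (Hp n)) as Hy.
  assert (Hmesh : mesh (N n) (fun i => g (t n i)) <= M * mesh (N n) (t n)).
  { unfold mesh at 1. apply fold_max_le.
    - pose proof (mesh_pos _ _ _ _ (Hp n)). nra.
    - intros x Hx. apply in_map_iff in Hx. destruct Hx as [i [<- Hi]]. apply in_seq in Hi.
      destruct (Hgap n i ltac:(lia)) as [_ H2].
      pose proof (gap_le_mesh (N n) (t n) i ltac:(lia)). nra. }
  assert (Hmin : m0 * minstep (N n) (t n) <= minstep (N n) (fun i => g (t n i))).
  { unfold minstep at 2. destruct (Hp n) as (HN & _).
    apply fold_min_ge.
    - destruct (Hgap n 0%nat HN) as [H1 _].
      pose proof (minstep_le_gap (N n) (t n) 0 HN). nra.
    - intros x Hx. apply in_map_iff in Hx. destruct Hx as [i [<- Hi]]. apply in_seq in Hi.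
      destruct (Hgap n i ltac:(lia)) as [H1 _].
      pose proof (minstep_le_gap (N n) (t n) i ltac:(lia)). nra. }
  assert (Hmin' : minstep (N n) (fun i => g (t n i)) > 0) by nra.
  rewrite <- (Rmult_1_l (M * c / m0)). unfold Rdiv at 2.
  replace (M * c * / m0) with ((M * c) / m0) by reflexivity.
  apply div_le2; auto.
  assert (Hm0 : m0 > 0) by lra.
  assert (mesh (N n) (fun i => g (t n i)) <= M * c * minstep (N n) (t n)) by nra.
  assert (M * c * minstep (N n) (t n) * m0 <= M * c * minstep (N n) (fun i => g (t n i))).
  { rewrite Rmult_assoc. apply Rmult_le_compat_l; nra. }
  nra.
Qed.
Theorem proposition2p2 (T : R) (N : nat -> nat) (t : nat -> nat -> R) :
  T > 0 ->
  (forall n, is_partition 0 T (N n) (t n)) ->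
  is_lim_seq (fun n => mesh (N n) (t n)) 0 ->
  (* (i) *)
  (balanced N t <->
     (Rbar_lt 0 (LimInf_seq (fun n => INR (N n) * minstep (N n) (t n))) /\
      Rbar_lt (LimSup_seq (fun n => INR (N n) * mesh (N n) (t n))) p_infty))
  /\
  (* (ii) *)
  (balanced N t -> forall h, 0 < h <= T ->
     Rbar_lt (LimSup_seq (fun n => sup_window T h (N n) (t n) / inf_window T h (N n) (t n)))
             p_infty)
  /\
  (* (iii) *)
  (balanced N t ->
     (Rbar_lt (LimSup_seq (fun n => INR (N (S n)) / INR (N n))) p_infty <->
      Rbar_lt (LimSup_seq (fun n => mesh (N n) (t n) / mesh (N (S n)) (t (S n)))) p_infty)
     /\
     (Rbar_lt (LimSup_seq (fun n => mesh (N n) (t n) / mesh (N (S n)) (t (S n)))) p_infty <->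
      Rbar_lt (LimSup_seq (fun n => minstep (N n) (t n) / minstep (N (S n)) (t (S n)))) p_infty))
  /\
  (* (iv) *)
  (forall g : R -> R,
     (exists g' : R -> R, C1_on_with 0 T g g' /\
        Rbar_lt 0 (Glb_Rbar (fun y => exists x, 0 <= x <= T /\ y = g' x))) ->
     (forall x y, 0 <= x <= T -> 0 <= y <= T -> x < y -> g x < g y) ->
     balanced N t ->
     (forall n, is_partition (g 0) (g T) (N n) (fun i => g (t n i))) /\
     balanced N (fun n i => g (t n i))).
Proof.
  intros HT Hp Hlim.
  split; [apply (part_i T); auto|].
  split; [intros Hb h Hh; apply (part_ii T); auto|].
  split; [intros Hb; apply (part_iii T); auto|].
  intros g Hg Hi Hb. apply part_iv; auto.
Qed.
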